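(* Let $X \in \{0,1\}$ be a binary random variable and let $Y_x$ be a real-valued random variable (a potential outcome). Suppose that for each $x' \in \{0,1\}$ the conditional distribution of $Y_x$ given $X = x'$ has a cdf that is strictly increasing and continuous on its support. Let $\underline{y}_x$ and $\overline{y}_x$ (possibly $-\infty$ and $+\infty$) denote the lower and upper endpoints of the support of $Y_x$, and let $p(y_x) = \Pr(X=1 \mid Y_x = y_x)$. Let $\mathcal{T} \subseteq \mathbb{R}$. Then $Y_x$ is $\mathcal{T}$-independent of $X$ if and only if \[ \mathbb{E}\big( p(Y_x) \mid Y_x \in (t_1,t_2) \big) = \Pr(X=1) \] for all $t_1, t_2 \in \mathcal{T} \cup \{\underline{y}_x, \overline{y}_x\}$ with $t_1 < t_2$.
   Context: $Y_x$ is called $\mathcal{T}$-independent of $X$ if $F_{Y_x\mid X}(\tau \mid 0) = F_{Y_x \mid X}(\tau \mid 1)$ for all $\tau \in \mathcal{T}$, where $F_{Y_x\mid X}(\cdot\mid x')$ is the conditional cdf of $Y_x$ given $X=x'$. The function $p$ is called the latent propensity score. *)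

(* Defs.v *)
From HB Require Import structures.
From mathcomp Require Import all_boot all_order all_algebra.
From mathcomp Require Import all_classical all_reals all_analysis.
Set Implicit Arguments. Unset Strict Implicit. Unset Printing Implicit Defensive.
Import Order.TTheory GRing.Theory Num.Theory.
Import numFieldNormedType.Exports.
Local Open Scope classical_set_scope.
Local Open Scope ring_scope.

Section defs.
Context {d : measure_display} {T : measurableType d} {R : realType}.
Variables (P : probability T R) (X : T -> bool) (Y : T -> R).

Definition prX (b : bool) : R := fine (P [set w | X w = b]).

Definition condcdf (b : bool) (tau : R) : R :=
  fine (P ([set w | Y w <= tau] `&` [set w | X w = b])) / prX b.

Definition condsupp (b : bool) : set R :=
  [set y | forall e : R, 0 < e ->
     (0 < P ([set w | (`|Y w - y| < e)%R] `&` [set w | X w = b]))%E].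

Definition supp : set R :=
  [set y | forall e : R, 0 < e -> (0 < P [set w | (`|Y w - y| < e)%R])%E].

Definition ylow : \bar R := ereal_inf (EFin @` supp).
Definition yup : \bar R := ereal_sup (EFin @` supp).

(* p is (a version of) the latent propensity score y |-> Pr(X = 1 | Y = y) *)
Definition is_propensity (p : R -> R) : Prop :=
  measurable_fun setT p /\
  P.-integrable setT (fun w => (p (Y w))%:E) /\
  forall B : set R, measurable B ->
    (\int[P]_(w in Y @^-1` B) (p (Y w))%:E = P (Y @^-1` B `&` [set w | X w = true]))%E.

Definition Yin (t1 t2 : \bar R) : set T := [set w | (t1 < (Y w)%:E < t2)%E].

Definition condexp_p (p : R -> R) (t1 t2 : \bar R) : R :=
  fine (\int[P]_(w in Yin t1 t2) (p (Y w))%:E) / fine (P (Yin t1 t2)).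

Definition T_independent (Tset : set R) : Prop :=
  forall tau, Tset tau -> condcdf false tau = condcdf true tau.
End defs.

(* Main.v *)
Require Import Defs.
From HB Require Import structures.
From mathcomp Require Import all_boot all_order all_algebra.
From mathcomp Require Import all_classical all_reals all_analysis.
From mathcomp Require Import ring lra measurable_realfun.
Import Order.TTheory GRing.Theory Num.Theory.
Import numFieldNormedType.Exports.
Local Open Scope classical_set_scope.
Local Open Scope ring_scope.

Section helpers.
Context {d : measure_display} {T : measurableType d} {R : realType}.
Variable (P : probability T R).

Definition mu (A : set T) : R := fine (P A).

Lemma PE A : measurable A -> P A = (mu A)%:E.
Proof. by move=> mA; rewrite /mu fineK // fin_num_measure. Qed.

Lemma mu_ge0 A : 0 <= mu A.
Proof. by rewrite /mu fine_ge0. Qed.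

Lemma mu_le A B : measurable A -> measurable B -> A `<=` B -> mu A <= mu B.
Proof.
move=> mA mB AB; by rewrite -lee_fin -!PE //; apply: le_measure; rewrite ?inE.
Qed.

Lemma muU A B : measurable A -> measurable B -> A `&` B = set0 ->
  mu (A `|` B) = mu A + mu B.
Proof.
move=> mA mB AB; apply/eqP; rewrite -(@eqe R) EFinD -!PE //; last exact: measurableU.
by rewrite measureU.
Qed.

Lemma muU2 A B : measurable A -> measurable B -> mu (A `|` B) <= mu A + mu B.
Proof.
move=> mA mB; rewrite -lee_fin EFinD -!PE //; last exact: measurableU.
exact: measureU2.
Qed.

Lemma muT : mu setT = 1.
Proof. by rewrite /mu probability_setT. Qed.

Lemma mu0 A : measurable A -> P A = 0%E -> mu A = 0.
Proof. by move=> _ h; rewrite /mu h. Qed.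

Lemma mu_eq0 A : measurable A -> mu A = 0 -> P A = 0%E.
Proof. by move=> mA h; rewrite PE // h. Qed.

End helpers.

Section h2.
Context {d : measure_display} {T : measurableType d} {R : realType}.
Variable (P : probability T R).
Variables (Z : T -> R) (mZ : measurable_fun setT Z).

Lemma mpre (B : set R) : measurable B -> measurable (Z @^-1` B).
Proof. by move=> mB; rewrite -[Z @^-1` B]setTI; exact: mZ. Qed.

Lemma mle c : measurable [set w | Z w <= c].
Proof.
have -> : [set w | Z w <= c] = Z @^-1` `]-oo, c] .
  by apply/seteqP; split=> w /=; rewrite in_itv.
apply: mpre; exact: measurable_itv.
Qed.

Lemma mball y e : measurable [set w | `|Z w - y| < e].
Proof.
have -> : [set w | `|Z w - y| < e] = Z @^-1` `]y - e, y + e[ .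
  by apply/seteqP; split=> w /=; rewrite in_itv /= ltr_distl.
apply: mpre; exact: measurable_itv.
Qed.

Lemma cdf_small eps : 0 < eps -> exists M, mu P [set w | Z w <= M] < eps.
Proof.
move=> e0.
pose F n := [set w | Z w <= - n%:R].
have h : (P \o F) x @[x --> \oo] --> P (\bigcap_n F n).
  apply: nonincreasing_cvg_mu.
  - by rewrite (le_lt_trans (probability_le1 _ (mle _))) ?ltry.
  - by move=> n; exact: mle.
  - by apply: bigcapT_measurable => n; exact: mle.
  - move=> m n mn; apply/subsetPset => x /=; rewrite /F => /le_trans; apply.
    by rewrite lerN2 ler_nat.
have E0 : \bigcap_n F n = set0.
  rewrite -subset0 => t /(_ (Num.bound `|Z t|) I).
  rewrite /F /= => h1.
  have h2 := archi_boundP (normr_ge0 (Z t)).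
  have h3 : `|Z t| < - Z t by rewrite (lt_le_trans h2) // lerNr.
  have := ler_norm (- Z t); rewrite normrN => h4.
  by have := lt_le_trans h3 h4; rewrite ltxx.
rewrite E0 measure0 in h.
move/fine_cvgP: h => [_ h].
have := cvgr_lt _ h _ e0.
case=> N _ hN.
exists (- N%:R); exact: (hN N (leqnn N)).
Qed.

Lemma supp_below c : (0 < P [set w | (Z w <= c)%R])%E -> exists y, supp P Z y /\ y <= c.
Proof.
move=> hc.
set m := mu P [set w | Z w <= c].
have m0 : 0 < m by rewrite -lte_fin -PE //; exact: mle.
clear hc.
have m20 : 0 < m / 2 by rewrite divr_gt0.
have [M hM] := cdf_small _ m20.
pose S := [set t | m / 2 <= mu P [set w | Z w <= t]].
have lbS : lbound S M.
  move=> t St; rewrite leNgt; apply/negP => tM.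
  have : mu P [set w | Z w <= t] <= mu P [set w | Z w <= M].
    apply: mu_le; [exact: mle|exact: mle|] => w /= /le_trans; apply; exact: ltW.
  by move=> h; have := le_lt_trans (le_trans St h) hM; rewrite ltxx.
have Sc : S c by rewrite /S /= -/m; lra.
have hS : has_inf S by split; [exists c | exists M].
exists (inf S); split; last exact: ge_inf (proj2 hS) _ Sc.
move=> e e0.
have e20 : 0 < e / 2 by rewrite divr_gt0.
have [t St te] := inf_adherent e20 hS.
have nS : ~ S (inf S - e / 2).
  move=> /(ge_inf (proj2 hS)) h; lra.
have lt1 : mu P [set w | Z w <= inf S - e / 2] < mu P [set w | Z w <= t].
  by rewrite (lt_le_trans _ St) // ltNge; apply/negP.
have sub : [set w | Z w <= t] `<=`
    [set w | Z w <= inf S - e / 2] `|` [set w | `|Z w - inf S| < e].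
  move=> w /= hw; have [hl|hl] := leP (Z w) (inf S - e / 2); [by left|right].
  rewrite ltr_distl; apply/andP; split.
    lra.
  lra.
have mU : measurable ([set w | Z w <= inf S - e / 2] `|` [set w | `|Z w - inf S| < e]).
  by apply: measurableU; [exact: mle|exact: mball].
have := le_trans (mu_le P _ _ (mle _) mU sub) (muU2 P _ _ (mle _) (mball _ _)).
rewrite (PE P _ (mball _ _)) lte_fin lt_neqAle mu_ge0 andbT => h.
apply/negP => /eqP h0; move: h; rewrite -h0 addr0 => h.
by have := lt_le_trans lt1 h; rewrite ltxx.
Qed.

Lemma mEF (B : set (\bar R)) : measurable B -> measurable [set w | B (Z w)%:E].
Proof.
move=> mB.
have mE : measurable_fun setT (EFin \o Z) by apply/measurable_EFinP.
have -> : [set w | B (Z w)%:E] = setT `&` (EFin \o Z) @^-1` B by rewrite setTI.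
exact: mE.
Qed.

Lemma mlt (t : \bar R) : measurable [set w | ((Z w)%:E < t)%E].
Proof.
apply: (mEF [set x | (x < t)%E]).
have -> : [set x : \bar R | (x < t)%E] = [set` Interval -oo%O (BLeft t)].
  by apply/seteqP; split => x /=; rewrite in_itv.
exact: emeasurable_itv.
Qed.

Lemma null_below (t : \bar R) : (forall y, (y%:E < t)%E -> P [set w | (Z w <= y)%R] = 0%E) ->
  P [set w | ((Z w)%:E < t)%E] = 0%E.
Proof.
move=> h; apply/negligibleP; first exact: mlt.
case: t h => [r | |] h.
- apply: (@negligibleS _ _ _ _ (\bigcup_n [set w | Z w <= r - n.+1%:R^-1])).
    move=> w /=; rewrite lte_fin => /ltr_add_invr [k hk].
    by exists k => //=; rewrite lerBrDr ltW.
  apply: negligible_bigcup => k; apply/negligibleP; first exact: mle.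
  by apply: h; rewrite lte_fin ltrBlDr ltrDl invr_gt0.
- apply: (@negligibleS _ _ _ _ (\bigcup_n [set w | Z w <= n%:R])).
    by move=> w _; exists (Num.Def.trunc (Z w)).+1 => //=; exact/ltW/truncnS_gt.
  apply: negligible_bigcup => k; apply/negligibleP; first exact: mle.
  by apply: h; rewrite ltry.
- have -> : [set w | ((Z w)%:E < -oo)%E] = set0.
    by apply/seteqP; split => w //=; rewrite ltNge leNye.
  exact: negligible_set0.
Qed.
End h2.


Lemma alg1 (R : realType) (a b p q : R) : p + q = 1 -> 0 < a + b ->
  (a / (a + b) = p <-> a * q - b * p = 0).
Proof.
move=> hpq hs; have s0 : a + b != 0 by rewrite gt_eqF.
split=> h.
  have ha : a = p * (a + b) by rewrite -h divfK.
  nra.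
apply: (mulIf s0); rewrite divfK //; nra.
Qed.

Lemma alg2 (R : realType) (a b p q : R) : 0 < p -> 0 < q ->
  (b / q = a / p <-> a * q - b * p = 0).
Proof.
move=> p0 q0; have pn : p != 0 by rewrite gt_eqF.
have qn : q != 0 by rewrite gt_eqF.
split=> h.
  have hb : b = a / p * q by rewrite -h divfK.
  rewrite hb; field; exact: pn.
apply: (mulIf qn); rewrite divfK //; apply: (mulIf pn).
have -> : a / p * q * p = a * q by field.
nra.
Qed.

Section main.
Context {d : measure_display} {T : measurableType d} {R : realType}.
Variables (P : probability T R) (X : T -> bool) (Y : T -> R).
Hypotheses (mX : measurable_fun setT X) (mY : measurable_fun setT Y).
Hypotheses (hX1 : (0 < P [set w | X w = true])%E) (hX0 : (0 < P [set w | X w = false])%E).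
Hypothesis (hcont : forall b y, condsupp P X Y b y -> {for y, continuous (condcdf P X Y b)}).

Let E b := [set w | X w = b].
Let mE b : measurable (E b).
Proof.
have -> : E b = setT `&` X @^-1` [set b] by rewrite setTI.
exact: mX.
Qed.

Let a A := mu P (A `&` E true).
Let bb A := mu P (A `&` E false).
Let pi1 := mu P (E true).
Let pi0 := mu P (E false).

Let pi1_gt0 : 0 < pi1. Proof. by rewrite -lte_fin -PE. Qed.
Let pi0_gt0 : 0 < pi0. Proof. by rewrite -lte_fin -PE. Qed.

Let split_mu A : measurable A -> mu P A = a A + bb A.
Proof.
move=> mA; rewrite /a /bb -muU //; last 3 first.
- exact: measurableI.
- exact: measurableI.
- apply/seteqP; split => w // [[_ h1] [_ h2]].
  by move: h1 h2; rewrite /E /= => ->.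
congr (mu P _); apply/seteqP; split => w.
  by move=> Aw; case Xw: (X w); [left|right].
by case=> -[].
Qed.

Let pi_sum : pi1 + pi0 = 1.
Proof. by rewrite -(muT P) (split_mu _ measurableT) /a /bb !setTI. Qed.

Let D A := a A * pi0 - bb A * pi1.

Let DU A B : measurable A -> measurable B -> A `&` B = set0 -> D (A `|` B) = D A + D B.
Proof.
move=> mA mB AB.
have hU b : mu P ((A `|` B) `&` E b) = mu P (A `&` E b) + mu P (B `&` E b).
  rewrite setIUl muU //; try exact: measurableI.
  by rewrite setIACA AB set0I.
rewrite /D /a /bb !hU; ring.
Qed.

Let D0 A : measurable A -> P A = 0%E -> D A = 0.
Proof.
move=> mA PA.
have h b : mu P (A `&` E b) = 0.
  apply/le_anti; rewrite mu_ge0 andbT.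
  have := mu_le P _ _ (measurableI _ _ mA (mE b)) mA (@subIsetl _ A (E b)).
  by rewrite /mu PA.
by rewrite /D /a /bb !h; ring.
Qed.

Let DT : D setT = 0.
Proof. by rewrite /D /a /bb !setTI /pi1 /pi0; ring. Qed.


Let mYle c : measurable [set w | Y w <= c]. Proof. exact: mle. Qed.

Let atom_b b y : mu P ([set w | Y w = y] `&` E b) = 0.
Proof.
have mA : measurable ([set w | Y w = y] `&` E b).
  apply: measurableI (mE b).
  have -> : [set w | Y w = y] = setT `&` Y @^-1` [set y] by rewrite setTI.
  exact: mY.
have pib : 0 < mu P (E b) by case: b mA.
case: (pselect (condsupp P X Y b y)) => hs.
- have hc := hcont _ _ hs.
  apply/le_anti; rewrite mu_ge0 andbT leNgt; apply/negP => m0.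
  set m := mu P _ in m0.
  have eps0 : 0 < m / mu P (E b) by rewrite divr_gt0.
  have H : \forall t \near y, `|condcdf P X Y b y - condcdf P X Y b t| < m / mu P (E b).
    exact: (cvgr_dist_lt _ _ hc _ eps0).
  move: H => /nbhs_ballP [del del0 hdel].
  have hb : ball y del (y - del / 2).
    rewrite -ball_normE /=.
    have -> : y - (y - del / 2) = del / 2 by ring.
    rewrite ger0_norm; last by rewrite divr_ge0 // ltW.
    by rewrite ltr_pdivrMr // ltr_pMr // ltr1n.
  have := hdel _ hb => /=.
  rewrite /condcdf /prX.
  change (`|mu P ([set w | Y w <= y] `&` E b) / mu P (E b) - mu P ([set w | Y w <= y - del / 2] `&` E b) / mu P (E b)| < m / mu P (E b) -> False).
  set u := mu P ([set w | Y w <= y] `&` E b).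
  set v := mu P ([set w | Y w <= y - del / 2] `&` E b).
  have huv : v + m <= u.
    have mv : measurable ([set w | Y w <= y - del / 2] `&` E b).
      by apply: measurableI (mE b); exact: mYle.
    have mu' : measurable ([set w | Y w <= y] `&` E b).
      by apply: measurableI (mE b); exact: mYle.
    rewrite /m /u /v -(muU P _ _ mv mA); last first.
      apply/seteqP; split => w // [[/= h1 _] [/= h2 _]]; move: h1; rewrite h2.
      by rewrite lerBrDr gerDl leNgt divr_gt0.
    apply: mu_le; [exact: measurableU|exact: mu'|].
    move=> w [[/= h1 h2]|[/= h1 h2]]; split => //=.
      by rewrite (le_trans h1) // lerBlDr lerDl divr_ge0 // ltW.
    by rewrite h1.
  have hv : 0 <= v by exact: mu_ge0.
  rewrite -mulrBl ger0_norm; last first.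
    by rewrite divr_ge0 ?ltW //; lra.
  rewrite ltr_pM2r ?invr_gt0 //; lra.
- move/existsNP: hs => [e /not_implyP [e0 he]].
  have h0 : P ([set w | `|Y w - y| < e] `&` [set w | X w = b]) = 0%E.
    apply/eqP; rewrite -measure_le0; move/negP: he; rewrite -leNgt; exact.
  apply/le_anti; rewrite mu_ge0 andbT.
  rewrite -(mu0 _ _ _ h0); last by apply: measurableI (mE b); exact: mball.
  apply: mu_le => //; first by apply: measurableI (mE b); exact: mball.
  by move=> w [/= -> h]; split => //=; rewrite subrr normr0.
Qed.


Let Lt (t : \bar R) := [set w | ((Y w)%:E < t)%E].
Let Eqt (t : \bar R) := [set w | (Y w)%:E = t].
Let Ge (t : \bar R) := [set w | (t <= (Y w)%:E)%E].

Let mLt t : measurable (Lt t). Proof. exact: mlt. Qed.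
Let mEqt t : measurable (Eqt t).
Proof.
apply: (mEF _ mY [set x | x = t]).
have -> : [set x : \bar R | x = t] = [set` Interval (BLeft t) (BRight t)].
  apply/seteqP; split => x /=; rewrite in_itv /=; first by move=> ->; rewrite lexx.
  by move=> /andP [h1 h2]; apply/le_anti; rewrite h1 h2.
exact: emeasurable_itv.
Qed.
Let mGe t : measurable (Ge t).
Proof.
apply: (mEF _ mY [set x | (t <= x)%E]).
have -> : [set x : \bar R | (t <= x)%E] = [set` Interval (BLeft t) +oo%O].
  by apply/seteqP; split => x /=; rewrite in_itv /= andbT.
exact: emeasurable_itv.
Qed.
Let mYin t1 t2 : measurable (Yin Y t1 t2).
Proof.
apply: (mEF _ mY [set x | (t1 < x < t2)%E]).
have -> : [set x : \bar R | (t1 < x < t2)%E] = [set` Interval (BRight t1) (BLeft t2)].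
  by apply/seteqP; split => x /=; rewrite in_itv.
exact: emeasurable_itv.
Qed.

Let atom y : P [set w | Y w = y] = 0%E.
Proof.
have mA : measurable [set w | Y w = y].
  have -> : [set w | Y w = y] = setT `&` Y @^-1` [set y] by rewrite setTI.
  exact: mY.
by apply: mu_eq0 => //; rewrite split_mu // /a /bb !atom_b addr0.
Qed.

Let PEqt t : P (Eqt t) = 0%E.
Proof.
case: t => [r| |].
- have -> : Eqt r%:E = [set w | Y w = r] by apply/seteqP; split => w /=; [case|move=> h; congr (_%:E)].
  exact: atom.
- have -> : Eqt +oo%E = set0 by apply/seteqP; split => w //=.
  exact: measure0.
- have -> : Eqt -oo%E = set0 by apply/seteqP; split => w //=.
  exact: measure0.
Qed.

Let DEqt t : D (Eqt t) = 0. Proof. exact: D0. Qed.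

Let Ddecomp t1 t2 : (t1 < t2)%E -> D (Lt t2) = D (Lt t1) + D (Yin Y t1 t2).
Proof.
move=> t12.
have -> : Lt t2 = (Lt t1 `|` Eqt t1) `|` Yin Y t1 t2.
  apply/seteqP; split => w /=.
    move=> h; case: (ltgtP (Y w)%:E t1) => h1; [by left; left|right|by left; right].
    by rewrite /Yin /= h1 h.
  case=> [[h|h]|/andP [_ h]] //.
    exact: lt_trans h t12.
  by rewrite /Eqt /= in h; rewrite /Lt /= h.
rewrite DU //; last 2 first.
- exact: measurableU.
- apply/seteqP; split => w // [[h|h] /andP [h1 h2]].
    by move: h1; rewrite ltNge ltW.
  by move: h1; rewrite h ltxx.
rewrite DU //; last first.
  apply/seteqP; split => w // [h1 h2]; move: h1; rewrite /Eqt /= in h2.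
  by rewrite /Lt /= h2 ltxx.
by rewrite DEqt addr0.
Qed.

Let Dle tau : D [set w | Y w <= tau] = D (Lt tau%:E).
Proof.
have -> : [set w | Y w <= tau] = Lt tau%:E `|` Eqt tau%:E.
  apply/seteqP; split => w /=.
    rewrite le_eqVlt => /orP [/eqP h|h]; first by right; rewrite /Eqt /= h.
    by left; rewrite /Lt /= lte_fin.
  case; rewrite /Lt /Eqt /=; first by rewrite lte_fin => /ltW.
  by case=> ->.
rewrite DU // ?DEqt ?addr0 //.
apply/seteqP; split => w // [h1 h2]; move: h1; rewrite /Eqt /= in h2.
by rewrite /Lt /= h2 ltxx.
Qed.


Let PLtlow : P (Lt (ylow P Y)) = 0%E.
Proof.
apply: (null_below P Y mY) => y hy.
apply/eqP; apply: contraT => hne.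
have hpos : (0 < P [set w | (Y w <= y)%R])%E by rewrite lt0e hne measure_ge0.
have [z [sz zy]] := supp_below P Y mY y hpos.
have hl : (ylow P Y <= z%:E)%E by apply: ereal_inf_lbound; exists z.
have := le_lt_trans (le_trans hl _) hy; rewrite lee_fin ltxx; exact.
Qed.

Let PGeup : P (Ge (yup P Y)) = 0%E.
Proof.
have mN : measurable_fun setT (fun w => - Y w) by exact: measurable_funN.
have hgt : P [set w | (yup P Y < (Y w)%:E)%E] = 0%E.
  have -> : [set w | (yup P Y < (Y w)%:E)%E] = [set w | ((- Y w)%:E < - yup P Y)%E].
    by apply/seteqP; split => w /=; rewrite EFinN lteN2.
  apply: (null_below P _ mN) => y hy.
  apply/eqP; apply: contraT => hne.
  have hpos : (0 < P [set w | (- Y w <= y)%R])%E by rewrite lt0e hne measure_ge0.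
  have [z [sz zy]] := supp_below P _ mN y hpos.
  have sz' : supp P Y (- z).
    move=> e e0; have := sz e e0.
    have -> : [set w | `|- Y w - z| < e] = [set w | `|Y w - - z| < e].
      have eqn w : `|- Y w - z| = `|Y w - - z|.
        by rewrite -normrN; congr (`|_|); ring.
      by apply/seteqP; split => w /=; rewrite eqn.
    by [].
  have hl : ((- z)%:E <= yup P Y)%E by apply: ereal_sup_ubound; exists (- z).
  move: hy; rewrite lteNr => hy.
  have h3 : ((- y)%:E <= (- z)%:E)%E by rewrite lee_fin lerN2.
  have := lt_le_trans (le_lt_trans hl hy) (h3 : (- y%:E <= (- z)%:E)%E).
  by rewrite ltxx.
have -> : Ge (yup P Y) = [set w | (yup P Y < (Y w)%:E)%E] `|` Eqt (yup P Y).
  apply/seteqP; split => w; rewrite /Ge /Eqt /=.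
    by rewrite le_eqVlt => /orP [/eqP h|h]; [right|left].
  by case=> [/ltW //|->].
have mG : measurable [set w | (yup P Y < (Y w)%:E)%E].
  apply: (mEF _ mY [set x | (yup P Y < x)%E]).
  have -> : [set x : \bar R | (yup P Y < x)%E] = [set` Interval (BRight (yup P Y)) +oo%O].
    by apply/seteqP; split => x /=; rewrite in_itv /= andbT.
  exact: emeasurable_itv.
apply: mu_eq0; first exact: measurableU.
apply/le_anti; rewrite mu_ge0 andbT.
apply: le_trans (muU2 P _ _ mG (mEqt _)) _.
by rewrite /mu hgt PEqt addr0.
Qed.

Let DLtlow : D (Lt (ylow P Y)) = 0. Proof. exact: D0. Qed.

Let DLtup : D (Lt (yup P Y)) = 0.
Proof.
have : D setT = D (Lt (yup P Y)) + D (Ge (yup P Y)).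
  rewrite -DU //.
    congr D; apply/seteqP; split => w // _; rewrite /Lt /Ge /=.
    by case: (ltP (Y w)%:E (yup P Y)); [left|right].
  apply/seteqP; split => w // []; rewrite /Lt /Ge /= => h1 h2.
  by have := lt_le_trans h1 h2; rewrite ltxx.
by rewrite DT (D0 _ (mGe _) PGeup) addr0.
Qed.


Variable p : R -> R.
Hypothesis hp : is_propensity P X Y p.

Let condexpE t1 t2 :
  condexp_p P Y p t1 t2 = a (Yin Y t1 t2) / (a (Yin Y t1 t2) + bb (Yin Y t1 t2)).
Proof.
have [_ [_ hB]] := hp.
have mB : measurable [set y : R | (t1 < y%:E < t2)%E].
  have := mEF id (@measurable_id _ _ setT) [set x | (t1 < x < t2)%E].
  apply.
  have -> : [set x : \bar R | (t1 < x < t2)%E] = [set` Interval (BRight t1) (BLeft t2)].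
    by apply/seteqP; split => x /=; rewrite in_itv.
  exact: emeasurable_itv.
have h := hB _ mB.
rewrite /condexp_p.
have -> : (\int[P]_(w in Yin Y t1 t2) (p (Y w))%:E)%E = P (Yin Y t1 t2 `&` E true) by exact: h.
rewrite -split_mu //.
Qed.

Let indepD tau : condcdf P X Y false tau = condcdf P X Y true tau <->
  D [set w | Y w <= tau] = 0.
Proof.
rewrite /condcdf /prX.
change (bb [set w | Y w <= tau] / pi0 = a [set w | Y w <= tau] / pi1 <-> D [set w | Y w <= tau] = 0).
exact: alg2.
Qed.

Lemma main_equiv (Tset : set R) :
  T_independent P X Y Tset <->
  (forall t1 t2 : \bar R,
     (EFin @` Tset `|` [set ylow P Y; yup P Y]) t1 ->
     (EFin @` Tset `|` [set ylow P Y; yup P Y]) t2 ->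
     (t1 < t2)%E ->
     (0 < P (Yin Y t1 t2))%E ->
     condexp_p P Y p t1 t2 = prX P X true).
Proof.
split.
- move=> hind t1 t2 h1 h2 t12 hpos.
  have K t : (EFin @` Tset `|` [set ylow P Y; yup P Y]) t -> D (Lt t) = 0.
    case=> [[tau Ttau <-]|[->|->]] //.
    by rewrite -Dle; apply/indepD; exact: hind.
  have spos : 0 < a (Yin Y t1 t2) + bb (Yin Y t1 t2).
    by rewrite -split_mu // -lte_fin -PE.
  rewrite condexpE; apply/(alg1 _ _ _ _ _ pi_sum spos).
  change (D (Yin Y t1 t2) = 0).
  by have := Ddecomp _ _ t12; rewrite (K _ h1) (K _ h2) add0r.
- move=> hce tau Ttau; apply/indepD; rewrite Dle.
  case: (leP (tau%:E) (ylow P Y)) => hl.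
    apply: D0 => //; apply: mu_eq0 => //.
    apply/le_anti; rewrite mu_ge0 andbT.
    rewrite -(mu0 _ _ (mLt _) PLtlow).
    apply: mu_le => // w; rewrite /Lt /= => h; exact: lt_le_trans h hl.
  have := Ddecomp _ _ hl; rewrite DLtlow add0r => ->.
  case: (pselect (0 < P (Yin Y (ylow P Y) tau%:E))%E) => hp'.
    have := hce _ _ (or_intror (or_introl erefl)) (or_introl (ex_intro2 _ _ tau Ttau erefl)) hl hp'.
    have spos : 0 < a (Yin Y (ylow P Y) tau%:E) + bb (Yin Y (ylow P Y) tau%:E).
      by rewrite -split_mu // -lte_fin -PE.
    by rewrite condexpE (alg1 _ _ _ _ _ pi_sum spos).
  apply: D0 => //; apply/eqP; rewrite -measure_le0 leNgt; exact/negP.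
Qed.

End main.

Theorem theorem1 (d : measure_display) (T : measurableType d) (R : realType)
  (P : probability T R) (X : T -> bool) (Y : T -> R)
  (mX : measurable_fun setT X) (mY : measurable_fun setT Y)
  (hX1 : (0 < P [set w | X w = true])%E) (hX0 : (0 < P [set w | X w = false])%E)
  (hinc : forall b y1 y2, condsupp P X Y b y1 -> condsupp P X Y b y2 ->
     y1 < y2 -> condcdf P X Y b y1 < condcdf P X Y b y2)
  (hcont : forall b y, condsupp P X Y b y -> {for y, continuous (condcdf P X Y b)})
  (p : R -> R) (hp : is_propensity P X Y p)
  (Tset : set R) :
  T_independent P X Y Tset <->
  (forall t1 t2 : \bar R,
     (EFin @` Tset `|` [set ylow P Y; yup P Y]) t1 ->
     (EFin @` Tset `|` [set ylow P Y; yup P Y]) t2 ->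
     (t1 < t2)%E ->
     (0 < P (Yin Y t1 t2))%E ->
     condexp_p P Y p t1 t2 = prX P X true).
Proof. exact: (main_equiv P X Y mX mY hX1 hX0 hcont p hp Tset). Qed.
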